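(* Let $f:\mathbb{N}\to\mathbb{R}$ with $f(1)=1$, and assume there exist $A,c>0$ such that $|f(n)|\leq A c^n$ for all $n\geq2$. (i) If $c\in(0,1)$, then $$|f^{-1}(n)| \leq \frac{\Omega(n)\, A\, n^{\varsigma+e\ln c}}{2^{\varsigma}} \leq \frac{A\, n^{\varsigma+e\ln c}\ln n}{2^{\varsigma}\ln 2}, \quad n\geq2,$$ where $\varsigma>1$ is the unique root of $\zeta(s)=\frac{1}{A}+1$. (ii) If $c\in(0,1)$ and $A\leq1$, then $|f^{-1}(n)|\leq n^{\rho+e\ln c}$ for all $n\geq2$, where $\rho=1.72865\dots$ is the unique root $s>1$ of $\zeta(s)=2$. (iii) If $c>1$, then there exists $\widetilde{A}>0$ such that $$|f^{-1}(n)| \leq Ac^n + \frac{(\Omega(n)-1)\,A\, n^{\upsilon}}{2^{\upsilon}}\, c^{n/2} \leq \widetilde{A}\, c^n, \quad n\geq2,$$ where $\upsilon>1$ is the unique root of $\zeta(s)=\frac{1}{Ac^2}+1$.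
   Context: $f^{-1}$ denotes the Dirichlet inverse of $f$: the arithmetic function with $\sum_{d\mid n} f(n/d) f^{-1}(d)=\varepsilon(n)$ for all $n$, where $\varepsilon(1)=1$ and $\varepsilon(n)=0$ for $n\ge2$. $\Omega(n)$ is the number of prime factors of $n$ counted with multiplicity. $\zeta$ is the Riemann zeta function and $e$ is Euler's number. *)

(* Defs.v *)
From HB Require Import structures.
From mathcomp Require Import all_boot all_order all_algebra.
From mathcomp Require Import all_classical all_reals all_analysis.
Set Implicit Arguments. Unset Strict Implicit. Unset Printing Implicit Defensive.
Import Order.TTheory GRing.Theory Num.Theory.
Local Open Scope ring_scope.

Definition prime_Omega (n : nat) : nat := (\sum_(p <- primes n) logn p n)%N.

(* Riemann zeta function on real s (meaningful for s > 1). *)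
Definition zeta (R : realType) (s : R) : R :=
  limn (fun N : nat => \sum_(1 <= k < N) ((k%:R : R) `^ (- s))).

(* g is the Dirichlet inverse of f (arithmetic functions on positive integers;
   the value at 0 is irrelevant):  sum_{d | n} f(n/d) g(d) = eps(n), n >= 1. *)
Definition dirichlet_inverse (R : realType) (f g : nat -> R) : Prop :=
  forall n : nat, (0 < n)%N ->
    \sum_(d <- divisors n) f (n %/ d)%N * g d = (n == 1)%:R.

(* Main.v *)
Require Import Defs.
From HB Require Import structures.
From mathcomp Require Import all_boot all_order all_algebra.
From mathcomp Require Import all_classical all_reals all_analysis.
From mathcomp Require Import ring lra zify.
From Stdlib Require Import Lia.
Import Order.TTheory GRing.Theory Num.Theory.
Import numFieldNormedType.Exports.
Set Implicit Arguments. Unset Strict Implicit. Unset Printing Implicit Defensive.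
Local Open Scope ring_scope.
Definition Tz (R : realType) (s : R) (N : nat) : R :=
  \sum_(1 <= k < N) ((k%:R : R) `^ (- s)).

Lemma Tz_succ (R : realType) (s : R) N : Tz s N.+1 = Tz s N + (if (1 <= N)%N then (N%:R : R) `^ (-s) else 0).
Proof.
rewrite /Tz; case: N => [|N]; first by rewrite !big_geq ?addr0.
by rewrite big_nat_recr.
Qed.

Lemma Tz_nd (R : realType) (s : R) : {homo Tz s : n m / (n <= m)%N >-> n <= m}.
Proof.
apply/nondecreasing_seqP => n; rewrite Tz_succ lerDl; case: ifP => // _; exact: powR_ge0.
Qed.

Lemma Tz_pow2 (R : realType) (s : R) J : 1 < s ->
  Tz s (2 ^ J) <= (1 - (2 `^ (1 - s)) ^+ J) / (1 - 2 `^ (1 - s)).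
Proof.
move=> s1; set r := 2 `^ (1 - s).
have r0 : 0 < r by rewrite powR_gt0.
have r1 : r < 1.
  rewrite /r /powR ifF //; last by rewrite pnatr_eq0.
  by rewrite expR_lt1 pmulr_llt0 ?ln_gt0 ?ltr1n // subr_lt0.
have r1' : 0 < 1 - r by rewrite subr_gt0.
elim: J => [|J IH]; first by rewrite expn0 /Tz big_geq // expr0 subrr mul0r.
rewrite /Tz (@big_cat_nat _ _ _ (2 ^ J)) //=; last 2 first.
- by rewrite expn_gt0.
- by rewrite leq_pexp2l.
have H : \sum_(2 ^ J <= k < 2 ^ J.+1) ((k%:R : R) `^ (- s)) <= r ^+ J.
  apply: (@le_trans _ _ (\sum_(2 ^ J <= k < 2 ^ J.+1) (((2 ^ J)%N%:R : R) `^ (- s)))).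
    rewrite big_nat_cond [X in _ <= X]big_nat_cond; apply: ler_sum => k /andP[/andP[Hk _] _].
    rewrite !powRN lef_pV2 ?posrE ?powR_gt0 ?ltr0n ?expn_gt0 //; last by apply: leq_trans Hk; rewrite expn_gt0.
    by apply: ge0_ler_powR; rewrite ?nnegrE ?ler_nat // ltW // (lt_trans _ s1).
  rewrite sumr_const_nat.
  have -> : (2 ^ J.+1 - 2 ^ J = 2 ^ J)%N by rewrite expnS mul2n -addnn addnK.
  rewrite -[_ *+ 2 ^ J]mulr_natr !natrX -(powR_mulrn J (_ : 0 <= 2)) //.
 rewrite -powRrM.
  rewrite -(powR_mulrn J (ltW r0)) /r -powRrM.
  rewrite -powRD; last by rewrite pnatr_eq0 implybT.
  by rewrite (_ : J%:R * - s + J%:R = (1 - s) * J%:R) //; ring.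
apply: (le_trans (lerD IH H)).
rewrite exprS; apply: (@le_trans _ _ ((1 - r ^+ J) / (1 - r) + r ^+ J)) => //.
rewrite le_eqVlt; apply/orP; left; apply/eqP; field.
by rewrite subr_eq0 eq_sym lt_eqF.
Qed.

Lemma Tz_bound (R : realType) (s : R) N : 1 < s ->
  Tz s N <= (1 - 2 `^ (1 - s))^-1.
Proof.
move=> s1; set r := 2 `^ (1 - s).
have r0 : 0 < r by rewrite powR_gt0.
have r1 : r < 1.
  rewrite /r /powR ifF //; last by rewrite pnatr_eq0.
  by rewrite expR_lt1 pmulr_llt0 ?ln_gt0 ?ltr1n // subr_lt0.
have r1' : 0 < 1 - r by rewrite subr_gt0.
apply: (le_trans (Tz_nd s (ltnW (ltn_expl N (isT : (1 < 2)%N))))).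
apply: (le_trans (Tz_pow2 N s1)).
rewrite ler_pdivrMr // mulVf ?gt_eqF // gerBl; exact: exprn_ge0 (ltW r0).
Qed.

Lemma Tz_cvg (R : realType) (s : R) : 1 < s -> cvgn (fun N => Tz s N).
Proof.
move=> s1; apply: nondecreasing_is_cvgn; first exact: Tz_nd.
exists (1 - 2 `^ (1 - s))^-1 => _ [N _ <-]; exact: Tz_bound.
Qed.

Lemma Tz_le_zeta (R : realType) (s : R) N : 1 < s -> Tz s N <= zeta s.
Proof.
move=> s1; exact: (@nondecreasing_cvgn_le R (Tz s) (Tz_nd s) (Tz_cvg s1)).
Qed.

Lemma divisors_reindex (R : realType) n (G : nat -> R) : (0 < n)%N ->
  \sum_(d <- divisors n) G d = \sum_(d <- divisors n) G (n %/ d)%N.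
Proof.
move=> n0; rewrite -(big_map (fun d => (n %/ d)%N) xpredT G).
apply: perm_big; apply: uniq_perm; first exact: divisors_uniq.
  rewrite map_inj_in_uniq ?divisors_uniq // => x y.
  rewrite -!dvdn_divisors // => xn yn E.
  by rewrite -(mulKn x n0) -(mulKn y n0) -!divnA // E.
move=> x; apply/idP/idP.
  rewrite -dvdn_divisors // => xn; apply/mapP; exists (n %/ x)%N.
    by rewrite -dvdn_divisors // dvdn_div.
  by rewrite divnA // mulKn.
by case/mapP => y; rewrite -!dvdn_divisors // => yn ->; rewrite dvdn_div.
Qed.

Lemma lt_div_iff n d : (0 < n)%N -> (d %| n)%N -> (d < n)%N = (1 < n %/ d)%N :> bool.
Proof.
move=> n0 dn; have nE := divnK dn; move: (n %/ d)%N nE => m nE.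
rewrite -nE in n0 *; apply/idP/idP => H; nia.
Qed.

Lemma sum_div_zeta (R : realType) (s : R) n : 1 < s -> (0 < n)%N ->
  \sum_(d <- divisors n | (d < n)%N) ((n %/ d)%N%:R : R) `^ (-s) <= zeta s - 1.
Proof.
move=> s1 n0; set F := fun e : nat => (e%:R : R) `^ (-s).
have F0 : forall e, 0 <= F e by move=> e; exact: powR_ge0.
rewrite big_mkcond (divisors_reindex _ n0).
rewrite (eq_big_seq (fun e => if (1 < e)%N then F e else 0)); last first.
  move=> e; rewrite -dvdn_divisors // => en.
  rewrite (@lt_div_iff n (n %/ e)%N) ?dvdn_div // divnA // mulKn //.
rewrite -big_mkcond /=.
have -> : \sum_(e <- divisors n | (1 < e)%N) F e =
    \sum_(e <- [seq x <- index_iota 1 n.+1 | x \in divisors n] | (1 < e)%N) F e.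
  apply: perm_big; apply: uniq_perm; first exact: divisors_uniq.
    by rewrite filter_uniq // iota_uniq.
  move=> x; rewrite mem_filter mem_iota; case xd: (x \in divisors n) => //=.
  move: xd; rewrite -dvdn_divisors // => xd.
  have := dvdn_leq n0 xd; have := dvdn_gt0 n0 xd; lia.
rewrite big_filter_cond.
apply: (@le_trans _ _ (\sum_(e <- index_iota 1 n.+1 | (1 < e)%N) F e)).
  rewrite [X in _ <= X](bigID (fun e => e \in divisors n)) /=.
  rewrite -[X in X <= _]addr0; apply: lerD; last by apply: sumr_ge0.
  by rewrite le_eqVlt; apply/orP; left; apply/eqP; apply: eq_bigl => e; rewrite andbC.
apply: (@le_trans _ _ (Tz s n.+1 - 1)); last by rewrite lerD2r Tz_le_zeta.
rewrite /Tz big_ltn // /= big_ltn_cond //= lerBrDl.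
rewrite /F powR1 lerD2l big_nat_cond [X in _ <= X]big_nat_cond.
by rewrite le_eqVlt; apply/orP; left; apply/eqP; apply: eq_bigl => i; case: (1 < i)%N.
Qed.

Lemma Omega_range n N : (0 < n)%N -> (n < N)%N ->
  prime_Omega n = (\sum_(0 <= p < N) logn p n)%N.
Proof.
move=> n0 nN.
have P : perm_eq (primes n) [seq p <- index_iota 0 N | p \in primes n].
  apply: uniq_perm; first exact: primes_uniq.
    by rewrite filter_uniq // iota_uniq.
  move=> p; rewrite mem_filter mem_iota; case pn: (p \in primes n) => //=.
  move: pn; rewrite mem_primes => /and3P[_ _ pd].
  have := dvdn_leq n0 pd; move=> H; rewrite add0n subn0; apply/esym; exact: (leq_ltn_trans H nN).
rewrite /prime_Omega (perm_big _ P) big_filter big_mkcond /=.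
apply: eq_bigr => p _; case: ifP => // H; apply/esym/eqP.
by rewrite -leqn0 leqNgt logn_gt0 H.
Qed.

Lemma Omega_lt n d : (0 < n)%N -> (d %| n)%N -> (d < n)%N ->
  (prime_Omega d < prime_Omega n)%N.
Proof.
move=> n0 dn dlt.
have d0 : (0 < d)%N by apply: dvdn_gt0 dn.
have m1 : (1 < n %/ d)%N by rewrite -lt_div_iff.
set m := (n %/ d)%N in m1.
have nE : n = (d * m)%N by rewrite mulnC divnK.
set p := pdiv m.
have pp : prime p by apply: pdiv_prime.
have pm : (p %| m)%N by apply: pdiv_dvd.
have m0 : (0 < m)%N by lia.
have pn : (p < n.+1)%N.
  have := pdiv_leq m0; have : (m <= n)%N by rewrite nE leq_pmull. rewrite -/p; lia.
have lp : (0 < logn p m)%N by rewrite logn_gt0 mem_primes pp m0 pm.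
rewrite (Omega_range n0 (ltnSn n)) (@Omega_range d n.+1) //; last by lia.
rewrite !(bigD1_seq p) ?mem_iota ?iota_uniq ?add0n ?subn0 //=.
have -> : logn p n = (logn p d + logn p m)%N by rewrite nE lognM.
have : (\sum_(i <- index_iota 0 n.+1 | i != p) logn i d <=
        \sum_(i <- index_iota 0 n.+1 | i != p) logn i n)%N.
  by apply: leq_sum => i _; apply: dvdn_leq_log.
lia.
Qed.

Lemma Omega_pow2 n : (0 < n)%N -> (2 ^ prime_Omega n <= n)%N.
Proof.
move=> n0; rewrite {2}(prod_prime_decomp n0) prime_decompE big_map /prime_Omega expn_sum /=.
rewrite big_seq_cond [X in (_ <= X)%N]big_seq_cond.
apply: leq_prod => p /andP[pn _].
case: (logn p n) => [|e] //; rewrite leq_exp2r //.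
by move: pn; rewrite mem_primes => /and3P[/prime_gt1].
Qed.

Lemma Omega_ge1 n : (2 <= n)%N -> (1 <= prime_Omega n)%N.
Proof.
move=> n2; have n0 : (0 < n)%N by lia.
have p1 := pdiv_prime n2.
rewrite (Omega_range n0 (ltnSn n)) (bigD1_seq (pdiv n)) ?iota_uniq //=.
  have : (0 < logn (pdiv n) n)%N by rewrite logn_gt0 mem_primes p1 n0 pdiv_dvd.
  lia.
by rewrite mem_iota add0n subn0 ltnS pdiv_leq.
Qed.

Lemma Omega_le_n n : (0 < n)%N -> (prime_Omega n <= n)%N.
Proof.
move=> n0; apply: leq_trans (Omega_pow2 n0); apply: ltnW; exact: ltn_expl.
Qed.

Lemma eln_le (R : realType) (m : R) : 0 < m -> expR 1 * ln m <= m.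
Proof.
move=> m0.
have e0 : 0 < expR 1 :> R by apply: expR_gt0.
have H : ln (m / expR 1) <= m / expR 1 - 1.
  have := @le_ln1Dx R (m / expR 1 - 1).
  rewrite addrCA subrr addr0; apply; have : 0 < m / expR 1 by rewrite divr_gt0.
  lra.
have : ln (m / expR 1) = ln m - 1.
  by rewrite ln_div ?posrE // expRK.
move=> E; rewrite E in H.
have : ln m <= m / expR 1 by lra.
by rewrite ler_pdivlMr // mulrC.
Qed.

Lemma powR_natE (R : realType) (m : nat) (x : R) : (0 < m)%N ->
  (m%:R : R) `^ x = expR (x * ln m%:R).
Proof. by move=> m0; rewrite /powR ifF // pnatr_eq0; case: m m0. Qed.

Lemma cpow_le (R : realType) (c : R) (m : nat) : 0 < c -> c < 1 -> (1 <= m)%N ->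
  c ^+ m <= (m%:R : R) `^ (expR 1 * ln c).
Proof.
move=> c0 c1 m1.
rewrite powR_natE // -{1}(lnK c0) -expRM_natl ler_expR.
have lc : ln c < 0 by rewrite ln_lt0 // c0 c1.
have := @eln_le R m%:R; rewrite ltr0n => /(_ m1) H.
nra.
Qed.

Lemma pow_split (R : realType) (m d : nat) (a b : R) : (0 < m)%N -> (0 < d)%N ->
  (m%:R : R) `^ b * (d%:R : R) `^ (a + b) = ((m * d)%N%:R : R) `^ (a + b) * (m%:R : R) `^ (- a).
Proof.
move=> m0 d0; rewrite natrM powRM ?ler0n // mulrAC -powRD; last by rewrite pnatr_eq0 -lt0n m0 implybT.
by congr (_ `^ _ * _); ring.
Qed.

Lemma ginv1 (R : realType) (f g : nat -> R) : f 1%N = 1 -> dirichlet_inverse f g -> g 1%N = 1.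
Proof.
move=> f1 H; have := H 1%N isT.
have -> : divisors 1 = [:: 1%N] by [].
by rewrite big_seq1 divn1 f1 mul1r.
Qed.

Lemma rec_bound (R : realType) (f g : nat -> R) n : f 1%N = 1 -> dirichlet_inverse f g ->
  (2 <= n)%N ->
  `|g n| <= \sum_(d <- divisors n | (d < n)%N) `|f (n %/ d)%N| * `|g d|.
Proof.
move=> f1 H n2; have n0 : (0 < n)%N by lia.
have := H n n0; rewrite (bigD1_seq n) ?divisors_id ?divisors_uniq //= divnn n0 f1 mul1r.
have -> : (n == 1%N) = false by apply/negbTE; lia.
move/eqP; rewrite addr_eq0 => /eqP ->; rewrite normrN.
apply: (le_trans (ler_norm_sum _ _ _)).
rewrite le_eqVlt; apply/orP; left; apply/eqP.
rewrite big_seq_cond [RHS]big_seq_cond; apply: eq_big => d.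
  case dn: (d \in divisors n) => //=; move: dn; rewrite -dvdn_divisors // => dn.
  by rewrite ltn_neqAle dvdn_leq // andbT.
by move=> _; rewrite normrM.
Qed.

Lemma split_one (R : realType) n (F : nat -> R) : (2 <= n)%N ->
  \sum_(d <- divisors n | (d < n)%N) F d =
  F 1%N + \sum_(d <- divisors n | (d < n)%N && (d != 1%N)) F d.
Proof.
move=> n2; rewrite big_mkcond (bigD1_seq 1%N) ?divisor1 ?divisors_uniq // big_mkcondl /=.
by have -> : (1 < n)%N by lia.
Qed.

Lemma sum_bound (R : realType) n (s K : R) (F : nat -> R) (P : pred nat) :
  1 < s -> (0 < n)%N -> 0 <= K ->
  (forall d, (d %| n)%N -> (d < n)%N -> P d -> F d <= K * ((n %/ d)%N%:R : R) `^ (-s)) ->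
  \sum_(d <- divisors n | (d < n)%N && P d) F d <= K * (zeta s - 1).
Proof.
move=> s1 n0 K0 HF.
apply: (@le_trans _ _ (\sum_(d <- divisors n | (d < n)%N && P d) (K * ((n %/ d)%N%:R : R) `^ (-s)))).
  rewrite big_seq_cond [X in _ <= X]big_seq_cond; apply: ler_sum => d /andP[dn /andP[dlt Pd]].
  by apply: HF => //; rewrite dvdn_divisors.
apply: (@le_trans _ _ (\sum_(d <- divisors n | (d < n)%N) (K * ((n %/ d)%N%:R : R) `^ (-s)))).
  rewrite [X in _ <= X](bigID P) /= lerDl; apply: sumr_ge0 => d _.
  by rewrite mulr_ge0 // powR_ge0.
by rewrite -mulr_sumr ler_wpM2l // sum_div_zeta.
Qed.

Lemma claim2 (R : realType) (f g : nat -> R) (A c rho : R) :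
  f 1%N = 1 -> dirichlet_inverse f g -> 0 < A -> 0 < c ->
  (forall n : nat, (2 <= n)%N -> `|f n| <= A * c ^+ n) ->
  c < 1 -> A <= 1 -> 1 < rho -> zeta rho = 2 ->
  forall n : nat, (1 <= n)%N -> `|g n| <= n%:R `^ (rho + expR 1 * ln c).
Proof.
move=> f1 Hg A0 c0 Hf c1 A1 r1 zr.
set ga := expR 1 * ln c.
elim/ltn_ind => n IH n1.
case: (ltngtP n 1) => [|n2|->]; first lia; last by rewrite (ginv1 f1 Hg) normr1 powR1.
apply: (le_trans (rec_bound f1 Hg n2)).
have n0 : (0 < n)%N by lia.
rewrite (eq_bigl (fun d => (d < n)%N && xpredT d)); last by move=> d; rewrite andbT.
apply: (@le_trans _ _ (n%:R `^ (rho + ga) * (zeta rho - 1))); last first.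
  by rewrite zr (_ : 2 - 1 = 1) ?mulr1 //; lra.
apply: sum_bound => //.
move=> d dn dlt _.
have d0 : (0 < d)%N by apply: dvdn_gt0 dn.
have m2 : (1 < n %/ d)%N by rewrite -lt_div_iff.
have nE : n = ((n %/ d) * d)%N by rewrite divnK.
apply: (@le_trans _ _ (((n %/ d)%N%:R : R) `^ ga * (d%:R : R) `^ (rho + ga))).
  apply: ler_pM => //.
  apply: (le_trans (Hf _ m2)).
  apply: (@le_trans _ _ (c ^+ (n %/ d)%N)).
    by rewrite ger_pMl ?exprn_gt0.
  by apply: cpow_le => //; lia.
  by apply: IH.
rewrite pow_split; [|lia|lia].
by rewrite -nE.
Qed.

Lemma Omega_le_real (R : realType) n d : (0 < n)%N -> (d %| n)%N -> (d < n)%N ->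
  ((prime_Omega d)%:R : R) <= (prime_Omega n)%:R - 1.
Proof.
move=> n0 dn dlt; have H := Omega_lt n0 dn dlt.
have : (((prime_Omega d).+1)%:R <= (prime_Omega n)%:R :> R) by rewrite ler_nat.
rewrite -addn1 natrD; lra.
Qed.

Lemma claim1 (R : realType) (f g : nat -> R) (A c vs : R) :
  f 1%N = 1 -> dirichlet_inverse f g -> 0 < A -> 0 < c ->
  (forall n : nat, (2 <= n)%N -> `|f n| <= A * c ^+ n) ->
  c < 1 -> 1 < vs -> zeta vs = A^-1 + 1 ->
  forall n : nat, (2 <= n)%N ->
  `|g n| <= (prime_Omega n)%:R * A * (n%:R `^ (vs + expR 1 * ln c)) / (2 `^ vs).
Proof.
move=> f1 Hg A0 c0 Hf c1 v1 zv.
set ga := expR 1 * ln c.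
elim/ltn_ind => n IH n2.
have n0 : (0 < n)%N by lia.
apply: (le_trans (rec_bound f1 Hg n2)); rewrite split_one //.
rewrite divn1 (ginv1 f1 Hg) normr1 mulr1.
set O := ((prime_Omega n)%:R : R).
set T := 2 `^ vs.
have T0 : 0 < T by rewrite powR_gt0.
set K := A * A * (O - 1) / T * n%:R `^ (vs + ga).
have O1 : 1 <= O by rewrite /O ler1n; apply: Omega_ge1.
apply: (@le_trans _ _ (A * n%:R `^ ga + K * (zeta vs - 1))).
  apply: lerD.
    apply: (le_trans (Hf _ n2)); apply: ler_wpM2l; [exact: ltW | apply: cpow_le => //; lia].
  apply: sum_bound => //.
    apply: mulr_ge0; last exact: powR_ge0.
    apply: divr_ge0; last exact: ltW.
    by apply: mulr_ge0; [apply: mulr_ge0; exact: ltW | rewrite subr_ge0].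
  move=> d dn dlt dne1.
  have d0 : (0 < d)%N by apply: dvdn_gt0 dn.
  have d2 : (2 <= d)%N by lia.
  have m2 : (1 < n %/ d)%N by rewrite -lt_div_iff.
  have nE : n = ((n %/ d) * d)%N by rewrite divnK.
  apply: (@le_trans _ _ ((A * ((n %/ d)%N%:R : R) `^ ga) *
          ((prime_Omega d)%:R * A * (d%:R `^ (vs + ga)) / T))).
    apply: ler_pM => //.
      apply: (le_trans (Hf _ m2)); apply: ler_wpM2l; [exact: ltW | apply: cpow_le => //; lia].
    exact: IH.
  apply: (@le_trans _ _ ((A * ((n %/ d)%N%:R : R) `^ ga) *
          ((O - 1) * A * (d%:R `^ (vs + ga)) / T))).
    apply: ler_wpM2l; first by apply: mulr_ge0; [exact: ltW | exact: powR_ge0].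
    rewrite ler_pM2r ?invr_gt0 // ler_pM2r ?powR_gt0 ?ltr0n // ler_pM2r //.
    exact: Omega_le_real.
  have E := @pow_split R (n %/ d)%N d vs ga ltac:(lia) d0.
  rewrite -nE in E.
  have nz : (n%:R : R) `^ (vs + ga) != 0 by rewrite gt_eqF // powR_gt0 // ltr0n.
  have E' : ((n %/ d)%N%:R : R) `^ (- vs) = ((n %/ d)%N%:R : R) `^ ga * (d%:R : R) `^ (vs + ga) / (n%:R : R) `^ (vs + ga).
    by rewrite E mulrAC mulfV // mul1r.
  rewrite E' /K le_eqVlt; apply/orP; left; apply/eqP; field.
  by apply/andP; split => //; rewrite gt_eqF.
rewrite zv addrK /K.
have -> : (n%:R : R) `^ (vs + ga) = n%:R `^ vs * n%:R `^ ga.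
  by rewrite powRD //; apply/implyP => _; rewrite pnatr_eq0; lia.
have TP : T <= n%:R `^ vs by apply: ge0_ler_powR; rewrite ?nnegrE ?ler_nat ?ler0n // ltW // (lt_trans _ v1).
set P := n%:R `^ vs in TP *.
set Q := n%:R `^ ga.
have Q0 : 0 < Q by rewrite powR_gt0 // ltr0n.
rewrite -subr_ge0.
have -> : O * A * (P * Q) / T - (A * Q + A * A * (O - 1) / T * (P * Q) * A^-1) = A * Q * (P - T) / T.
  by field; apply/andP; split; rewrite gt_eqF.
apply: divr_ge0; last exact: ltW.
by apply: mulr_ge0; [apply: mulr_ge0; exact: ltW | rewrite subr_ge0].
Qed.

Lemma cexp_le (R : realType) (c y : R) (n : nat) : 1 < c -> y <= n%:R / 2 + 2 ->
  c `^ y <= c `^ (n%:R / 2) * c ^+ 2.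
Proof.
move=> c1 yle; have c0 : 0 <= c by lra.
rewrite -(powR_mulrn 2 c0) -powRD; last by apply/implyP => _; rewrite gt_eqF //; lra.
by apply: ler_powR => //; lra.
Qed.

Lemma md_le (R : realType) (m d : nat) : (2 <= m)%N -> (2 <= d)%N ->
  (m%:R + d%:R : R) <= (m * d)%N%:R / 2 + 2.
Proof.
move=> m2 d2; have H : (2 * (m + d) <= m * d + 4)%N by nia.
have : ((2 * (m + d))%N%:R <= (m * d + 4)%N%:R :> R) by rewrite ler_nat.
rewrite !natrD !natrM; lra.
Qed.

Lemma claim3 (R : realType) (f g : nat -> R) (A c ups : R) :
  f 1%N = 1 -> dirichlet_inverse f g -> 0 < A -> 0 < c ->
  (forall n : nat, (2 <= n)%N -> `|f n| <= A * c ^+ n) ->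
  1 < c -> 1 < ups -> zeta ups = (A * c ^+ 2)^-1 + 1 ->
  forall n : nat, (2 <= n)%N ->
  `|g n| <= A * c ^+ n
        + ((prime_Omega n)%:R - 1) * A * (n%:R `^ ups) / (2 `^ ups) * (c `^ (n%:R / 2)).
Proof.
move=> f1 Hg A0 c0 Hf c1 u1 zu.
have c0' : 0 <= c by lra.
elim/ltn_ind => n IH n2.
have n0 : (0 < n)%N by lia.
apply: (le_trans (rec_bound f1 Hg n2)); rewrite split_one //.
rewrite divn1 (ginv1 f1 Hg) normr1 mulr1.
set O := ((prime_Omega n)%:R : R).
set T := 2 `^ ups.
have T0 : 0 < T by rewrite powR_gt0.
set C := c `^ (n%:R / 2) * c ^+ 2.
have C0 : 0 < C by rewrite mulr_gt0 ?powR_gt0 ?exprn_gt0.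
set K := A * ((O - 1) * A * n%:R `^ ups / T) * C.
have O1 : 1 <= O by rewrite /O ler1n; apply: Omega_ge1.
apply: (@le_trans _ _ (A * c ^+ n + K * (zeta ups - 1))).
  apply: lerD; first exact: Hf.
  apply: sum_bound => //.
    apply: mulr_ge0; last exact: ltW.
    apply: mulr_ge0; first exact: ltW.
    apply: divr_ge0; last exact: ltW.
    apply: mulr_ge0; last exact: powR_ge0.
    by apply: mulr_ge0; [rewrite subr_ge0 | exact: ltW].
  move=> d dn dlt dne1.
  have d0 : (0 < d)%N by apply: dvdn_gt0 dn.
  have d2 : (2 <= d)%N by lia.
  have m2 : (1 < n %/ d)%N by rewrite -lt_div_iff.
  have nE : n = ((n %/ d) * d)%N by rewrite divnK.
  set m := (n %/ d)%N in m2 nE *.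
  set X := ((prime_Omega d)%:R - 1) * A * (d%:R `^ ups) / T.
  have X0 : 0 <= X.
    apply: divr_ge0; last exact: ltW.
    apply: mulr_ge0; last exact: powR_ge0.
    apply: mulr_ge0; last exact: ltW.
    by rewrite subr_ge0 ler1n; apply: Omega_ge1.
  apply: (@le_trans _ _ ((A * c ^+ m) * (A * c ^+ d + X * c `^ (d%:R / 2)))).
    by apply: ler_pM => //; [exact: Hf | exact: IH].
  have H1 : c ^+ m * c ^+ d <= C.
    rewrite -!(powR_mulrn _ c0') -powRD; last by apply/implyP => _; rewrite gt_eqF //; lra.
    by apply: cexp_le => //; rewrite nE md_le.
  have H2 : c ^+ m * c `^ (d%:R / 2) <= C.
    rewrite -!(powR_mulrn _ c0') -powRD; last by apply/implyP => _; rewrite gt_eqF //; lra.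
    apply: cexp_le => //; rewrite nE; apply: le_trans (md_le _ m2 d2).
    by rewrite lerD2l ler_pdivrMr //; rewrite ler_peMr ?ler0n //; lra.
  apply: (@le_trans _ _ (A * (A * C + X * C))).
    have -> : A * c ^+ m * (A * c ^+ d + X * c `^ (d%:R / 2)) =
        A * (A * (c ^+ m * c ^+ d) + X * (c ^+ m * c `^ (d%:R / 2))) by ring.
    apply: ler_wpM2l; first exact: ltW.
    by apply: lerD; apply: ler_wpM2l => //; exact: ltW.
  have HT : T <= d%:R `^ ups.
    by apply: ge0_ler_powR; rewrite ?nnegrE ?ler_nat ?ler0n // ltW // (lt_trans _ u1).
  have HAX : A + X <= (O - 1) * A * d%:R `^ ups / T.
    apply: (@le_trans _ _ ((prime_Omega d)%:R * A * d%:R `^ ups / T)).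
      have -> : (prime_Omega d)%:R * A * d%:R `^ ups / T = A * d%:R `^ ups / T + X.
        by rewrite /X; field; rewrite gt_eqF.
      rewrite lerD2r ler_pdivlMr // ler_pM2l //.
    rewrite ler_pM2r ?invr_gt0 // ler_pM2r ?powR_gt0 ?ltr0n // ler_pM2r //.
    exact: Omega_le_real.
  have E := @pow_split R m d ups 0 (ltnW m2) d0.
  rewrite powRr0 mul1r !addr0 -nE in E.
  have nz : (n%:R : R) `^ ups != 0 by rewrite gt_eqF // powR_gt0 // ltr0n.
  have E' : (m%:R : R) `^ (- ups) = (d%:R : R) `^ ups / (n%:R : R) `^ ups.
    by rewrite E mulrAC mulfV // mul1r.
  rewrite E' /K.
  apply: (@le_trans _ _ (A * ((O - 1) * A * d%:R `^ ups / T) * C)).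
    rewrite -mulrDl mulrA ler_pM2r //; apply: ler_wpM2l => //; exact: ltW.
  rewrite le_eqVlt; apply/orP; left; apply/eqP; field.
  by apply/andP; split => //; rewrite gt_eqF.
rewrite zu addrK lerD2l /K.
rewrite le_eqVlt; apply/orP; left; apply/eqP; rewrite /C; field.
by rewrite !gt_eqF ?exprn_gt0 ?powR_gt0 //.
Qed.

Lemma Omega_le_ln (R : realType) n : (2 <= n)%N ->
  ((prime_Omega n)%:R : R) <= ln n%:R / ln 2.
Proof.
move=> n2; have n0 : (0 < n)%N by lia.
have l2 : 0 < ln 2 :> R by rewrite ln_gt0 // ltr1n.
rewrite ler_pdivlMr //.
have H : ((2 ^ prime_Omega n)%N%:R <= n%:R :> R) by rewrite ler_nat Omega_pow2.
have : ln ((2 ^ prime_Omega n)%N%:R) <= ln (n%:R : R).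
  by rewrite ler_ln // posrE ltr0n // expn_gt0.
by rewrite natrX lnXn // mulr_natl.
Qed.

Lemma At_bound (R : realType) (c ups : R) : 1 < c -> 1 < ups ->
  exists M : R, forall n : nat, (1 <= n)%N ->
  (n%:R : R) * (n%:R : R) `^ ups * c `^ (n%:R / 2) <= expR M * c ^+ n.
Proof.
move=> c1 u1.
set a := ln c / 2; set k := ups + 1.
have a0 : 0 < a by rewrite /a divr_gt0 // ln_gt0.
have k0 : 0 < k by rewrite /k; lra.
exists (k * ln (k / a)) => n n1.
have nR : 0 < (n%:R : R) by rewrite ltr0n.
have -> : (n%:R : R) * n%:R `^ ups = n%:R `^ k.
  rewrite /k powRD; last by apply/implyP => _; rewrite gt_eqF.
  by rewrite powRr1 ?ler0n // mulrC.
have c0 : 0 < c by lra.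
have E1 : c `^ (n%:R / 2) = expR (a * n%:R).
  by rewrite /powR ifF ?gt_eqF // /a; congr expR; rewrite mulrC mulrA mulrAC.
have E2 : c ^+ n = c `^ (n%:R / 2) * c `^ (n%:R / 2).
  rewrite -powRD; last by apply/implyP => _; rewrite gt_eqF.
  by rewrite -splitr powR_mulrn // ltW.
rewrite E2 mulrA ler_pM2r ?powR_gt0 //.
rewrite E1 -expRD /powR ifF ?gt_eqF // ler_expR.
have L : ln (n%:R : R) = ln (a * n%:R / k) + ln (k / a).
  have N : a * n%:R / k * (k / a) = n%:R.
    by field; apply/andP; split; rewrite gt_eqF.
  rewrite -{1}N; apply: lnM; rewrite posrE; apply: divr_gt0 => //.
  exact: mulr_gt0.
have S : ln (a * n%:R / k) < a * n%:R / k.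
  apply: ln_sublinear; apply: divr_gt0 => //; exact: mulr_gt0.
rewrite L mulrDr.
have : k * ln (a * n%:R / k) <= a * n%:R.
  apply: (@le_trans _ _ (k * (a * n%:R / k))); first by rewrite ler_pM2l // ltW.
  by rewrite le_eqVlt; apply/orP; left; apply/eqP; field; rewrite gt_eqF.
lra.
Qed.

Unset Implicit Arguments.

Theorem proposition3p13 (R : realType) (f finv : nat -> R) (A c : R) :
  f 1%N = 1 ->
  dirichlet_inverse f finv ->
  0 < A -> 0 < c ->
  (forall n : nat, (2 <= n)%N -> `|f n| <= A * c ^+ n) ->
  (* (i) *)
  ((c < 1) ->
   forall vs : R, 1 < vs -> zeta vs = A^-1 + 1 ->
   forall n : nat, (2 <= n)%N ->
     `|finv n| <= (prime_Omega n)%:R * A * (n%:R `^ (vs + expR 1 * ln c)) / (2 `^ vs)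
     /\ (prime_Omega n)%:R * A * (n%:R `^ (vs + expR 1 * ln c)) / (2 `^ vs)
        <= A * (n%:R `^ (vs + expR 1 * ln c)) * ln (n%:R) / ((2 `^ vs) * ln 2)) /\
  (* (ii) *)
  ((c < 1) -> A <= 1 ->
   forall rho : R, 1 < rho -> zeta rho = 2 ->
   forall n : nat, (2 <= n)%N ->
     `|finv n| <= n%:R `^ (rho + expR 1 * ln c)) /\
  (* (iii) *)
  ((1 < c) ->
   forall ups : R, 1 < ups -> zeta ups = (A * c ^+ 2)^-1 + 1 ->
   exists At : R, 0 < At /\
   forall n : nat, (2 <= n)%N ->
     `|finv n| <= A * c ^+ n
        + ((prime_Omega n)%:R - 1) * A * (n%:R `^ ups) / (2 `^ ups) * (c `^ (n%:R / 2))
     /\ A * c ^+ n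
        + ((prime_Omega n)%:R - 1) * A * (n%:R `^ ups) / (2 `^ ups) * (c `^ (n%:R / 2))
        <= At * c ^+ n).
Proof.
move=> f1 Hg A0 c0 Hf.
split; [|split].
- move=> c1 vs v1 zv n n2; split; first exact: (claim1 f1 Hg A0 c0 Hf c1 v1 zv n2).
  set P := n%:R `^ (vs + expR 1 * ln c); set T := 2 `^ vs.
  have T0 : 0 < T by rewrite powR_gt0.
  have l2 : 0 < ln 2 :> R by rewrite ln_gt0 // ltr1n.
  have P0 : 0 <= P by apply: powR_ge0.
  have -> : A * P * ln n%:R / (T * ln 2) = (A * P / T) * (ln n%:R / ln 2).
    by field; apply/andP; split; rewrite gt_eqF.
  have -> : (prime_Omega n)%:R * A * P / T = (A * P / T) * (prime_Omega n)%:R by ring.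
  apply: ler_wpM2l; last exact: Omega_le_ln.
  by apply: divr_ge0; [apply: mulr_ge0 => //; exact: ltW | exact: ltW].
- move=> c1 A1 rho r1 zr n n2.
  by apply: (claim2 f1 Hg A0 c0 Hf c1 A1 r1 zr); lia.
- move=> c1 ups u1 zu.
  have [M HM] := At_bound c1 u1.
  exists (A + A * expR M); split.
    by apply: addr_gt0 => //; apply: mulr_gt0 => //; exact: expR_gt0.
  move=> n n2; split; first exact: (claim3 f1 Hg A0 c0 Hf c1 u1 zu n2).
  rewrite [X in _ <= X]mulrDl lerD2l.
  set T := 2 `^ ups; set O := ((prime_Omega n)%:R : R).
  set Q := n%:R `^ ups * c `^ (n%:R / 2).
  have Q0 : 0 <= Q by apply: mulr_ge0; exact: powR_ge0.
  have T1 : 1 <= T.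
    have h : (2:R) `^ 0 <= 2 `^ ups by apply: ler_powR; [rewrite ler1n | lra].
    by rewrite powRr0 in h.
  have T0 : 0 < T by lra.
  have On : O <= n%:R by rewrite /O ler_nat Omega_le_n //; lia.
  apply: (@le_trans _ _ (A * (n%:R * Q))).
    have -> : (O - 1) * A * n%:R `^ ups / T * c `^ (n%:R / 2) = A * (Q * ((O - 1) / T)).
      by rewrite /Q; field; rewrite gt_eqF.
    apply: ler_wpM2l; first exact: ltW.
    rewrite mulrC; apply: ler_wpM2r => //.
    rewrite ler_pdivrMr //.
    have n0 : 0 <= (n%:R : R) by rewrite ler0n.
    nra.
  rewrite -mulrA; apply: ler_wpM2l; first exact: ltW.
  rewrite /Q mulrA; apply: HM; lia.
Qed.
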